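(* Let $S=(P,L)$ be a $(2,t)$-generalized quadrangle and let $(R,\psi)$ be a representation of $S$. Then $R$ is an elementary abelian $2$-group.
   Context: A $(2,t)$-generalized quadrangle is a partial linear space (two distinct points on at most one line) in which every line has exactly $3$ points, every point lies on exactly $t+1$ lines, no point is collinear with all points, and for every point $x$ and line $\ell$ with $x\notin\ell$, $x$ is collinear with exactly one point of $\ell$. A representation $(R,\psi)$ of $S$ is a group $R$ together with a map $\psi$ assigning to each point $x$ a subgroup $\psi(x)=\langle r_x\rangle$ of order $2$, such that $R$ is generated by $\{r_x:x\in P\}$ and, for every line $\{x,y,z\}$, $\{1,r_x,r_y,r_z\}$ is a Klein four subgroup of $R$. *)

(* Defs.v *)
From Stdlib Require Import List.
Import ListNotations.

Definition has_card {T : Type} (A : T -> Prop) (n : nat) : Prop :=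
  exists s : list T, NoDup s /\ length s = n /\ forall x, A x <-> In x s.

Definition collinear {P L : Type} (I : P -> L -> Prop) (x y : P) : Prop :=
  exists l, I x l /\ I y l.

Definition is_GQ_2t {P L : Type} (I : P -> L -> Prop) (t : nat) : Prop :=
  (forall x y l m, x <> y -> I x l -> I y l -> I x m -> I y m -> l = m) /\
  (forall l, has_card (fun x => I x l) 3) /\
  (forall x, has_card (fun l => I x l) (t + 1)) /\
  (forall x, exists y, ~ collinear I x y) /\
  (forall x l, ~ I x l ->
     exists y, (I y l /\ collinear I x y) /\
       forall y', I y' l -> collinear I x y' -> y' = y).

Definition is_group {G : Type} (mul : G -> G -> G) (inv : G -> G) (e : G) : Prop :=
  (forall a b c, mul a (mul b c) = mul (mul a b) c) /\
  (forall a, mul e a = a) /\ (forall a, mul a e = a) /\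
  (forall a, mul (inv a) a = e) /\ (forall a, mul a (inv a) = e).

Definition is_subgroup {G : Type} (mul : G -> G -> G) (inv : G -> G) (e : G)
  (H : G -> Prop) : Prop :=
  H e /\ (forall a b, H a -> H b -> H (mul a b)) /\ (forall a, H a -> H (inv a)).

Definition generated_by {G X : Type} (mul : G -> G -> G) (inv : G -> G) (e : G)
  (gen : X -> G) : Prop :=
  forall H : G -> Prop, is_subgroup mul inv e H -> (forall x, H (gen x)) ->
    forall g, H g.

Definition order_two {G : Type} (mul : G -> G -> G) (e : G) (a : G) : Prop :=
  a <> e /\ mul a a = e.

Definition klein_four {G : Type} (mul : G -> G -> G) (e : G) (a b c : G) : Prop :=
  let K := fun g => g = e \/ g = a \/ g = b \/ g = c in
  NoDup [e; a; b; c] /\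
  (forall g h, K g -> K h -> K (mul g h)) /\
  (forall g, K g -> mul g g = e).

(* A representation (R, psi) of the incidence structure: psi x = <r x>
   of order 2, R generated by the r x, and each line {x,y,z} gives a Klein
   four subgroup {1, r x, r y, r z}. *)
Definition is_representation {P L G : Type} (I : P -> L -> Prop)
  (mul : G -> G -> G) (inv : G -> G) (e : G) (r : P -> G) : Prop :=
  (forall x, order_two mul e (r x)) /\
  generated_by mul inv e r /\
  (forall l x y z, I x l -> I y l -> I z l -> x <> y -> y <> z -> x <> z ->
     klein_four mul e (r x) (r y) (r z)).

Definition elementary_abelian_2 {G : Type} (mul : G -> G -> G) (e : G) : Prop :=
  (forall a b, mul a b = mul b a) /\ (forall a, mul a a = e).

(* Main.v *)
Require Import Defs.
From Stdlib Require Import List Classical Lia.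
Import ListNotations.

Section Geo.
Variables (P L : Type) (I : P -> L -> Prop) (t : nat).
Hypothesis pls : forall x y l m, x <> y -> I x l -> I y l -> I x m -> I y m -> l = m.
Hypothesis card3 : forall l, has_card (fun x => I x l) 3.
Hypothesis ptcard : forall x, has_card (fun l => I x l) (t + 1).
Hypothesis gqax : forall x l, ~ I x l ->
     exists y, (I y l /\ collinear I x y) /\
       forall y', I y' l -> collinear I x y' -> y' = y.

Lemma nodup3 {T : Type} (a b c : T) : NoDup [a;b;c] -> a <> b /\ a <> c /\ b <> c.
Proof.
  intros H. inversion H; subst. inversion H3; subst. simpl in *. intuition.
Qed.

Lemma third_pt a b l : a <> b -> I a l -> I b l -> exists c, I c l /\ c <> a /\ c <> b.
Proof.
  intros Hab Ha Hb. destruct (card3 l) as [s [Hnd [Hlen Hin]]].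
  destruct s as [|p1 [|p2 [|p3 [|]]]]; simpl in Hlen; try discriminate.
  apply nodup3 in Hnd. destruct Hnd as [d12 [d13 d23]].
  assert (I p1 l /\ I p2 l /\ I p3 l) as [H1 [H2 H3]] by (repeat split; apply Hin; simpl; tauto).
  apply Hin in Ha; apply Hin in Hb. simpl in Ha, Hb.
  destruct Ha as [?|[?|[?|[]]]]; destruct Hb as [?|[?|[?|[]]]];
  first [ exists p1; split; [exact H1| split; congruence]
        | exists p2; split; [exact H2| split; congruence]
        | exists p3; split; [exact H3| split; congruence] ].
Qed.

Lemma line3 a b c z l : I a l -> I b l -> I c l -> a <> b -> a <> c -> b <> c -> I z l ->
  z = a \/ z = b \/ z = c.
Proof.
  intros Ha Hb Hc dab dac dbc Hz. destruct (card3 l) as [s [Hnd [Hlen Hin]]].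
  destruct s as [|p1 [|p2 [|p3 [|]]]]; simpl in Hlen; try discriminate.
  apply nodup3 in Hnd. destruct Hnd as [d12 [d13 d23]].
  apply Hin in Ha; apply Hin in Hb; apply Hin in Hc; apply Hin in Hz. simpl in *.
  destruct Ha as [?|[?|[?|[]]]]; destruct Hb as [?|[?|[?|[]]]];
  destruct Hc as [?|[?|[?|[]]]]; destruct Hz as [?|[?|[?|[]]]];
  first [ left; congruence | right; left; congruence | right; right; congruence
        | exfalso; congruence ].
Qed.

Lemma col_sym a b : collinear I a b -> collinear I b a.
Proof. intros [l [? ?]]. exists l; auto. Qed.

Lemma col_of a b l : I a l -> I b l -> collinear I a b.
Proof. intros. exists l; auto. Qed.

Lemma notri a b c : a <> b -> b <> c -> a <> c -> collinear I a b -> collinear I b c ->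
  collinear I a c -> exists l, I a l /\ I b l /\ I c l.
Proof.
  intros dab dbc dac [l [Ha Hb]] Hbc Hac.
  destruct (classic (I c l)) as [Hc|Hc]. exists l; auto.
  destruct (gqax c l Hc) as [y [_ Hu]].
  assert (a = y) by (apply Hu; auto; apply col_sym; auto).
  assert (b = y) by (apply Hu; auto; apply col_sym; auto).
  congruence.
Qed.

Lemma two_lines x y : ~ collinear I x y -> exists l1 l2, l1 <> l2 /\ I y l1 /\ I y l2.
Proof.
  intros Hxy. destruct (ptcard y) as [s [Hnd [Hlen Hin]]].
  destruct s as [|l1 [|l2 s']]; simpl in Hlen.
  - lia.
  - assert (t = 0) by lia. subst t.
    assert (Hy : I y l1) by (apply Hin; simpl; auto).
    assert (Hx : ~ I x l1) by (intro; apply Hxy; exists l1; auto).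
    destruct (gqax x l1 Hx) as [u [[Hu [m [Hxm Hum]]] _]].
    destruct (ptcard u) as [s2 [_ [Hlen2 Hin2]]].
    destruct s2 as [|k [|]]; simpl in Hlen2; try discriminate.
    apply Hin2 in Hu. apply Hin2 in Hum. simpl in Hu, Hum.
    exfalso. apply Hx. destruct Hu as [Hu|[]]; destruct Hum as [Hum|[]]; subst. auto.
  - exists l1, l2. inversion Hnd; subst. split.
    + intro; subst; simpl in *; tauto.
    + split; apply Hin; simpl; auto.
Qed.

Lemma cross x y u1 u2 l1 l2 m2 v2 w1 :
  ~ collinear I x y -> I y l1 -> I u1 l1 -> I w1 l1 -> I x m2 -> I u2 m2 -> I v2 m2 ->
  I y l2 -> I u2 l2 -> l1 <> l2 -> collinear I x u1 ->
  w1 <> y -> w1 <> u1 -> v2 <> x -> v2 <> u2 ->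
  collinear I v2 w1 /\ v2 <> w1.
Proof.
  intros nxy Hy1 Hu1 Hw1 Hx2 Hu2 Hv2 Hy2 Hu22 d12 cxu1 dw1y dw1u1 dv2x dv2u2.
  assert (du1y : u1 <> y) by (intro; subst; auto).
  assert (du2y : u2 <> y) by (intro; subst; apply nxy; exists m2; auto).
  assert (du12 : u1 <> u2) by (intro; subst; apply d12; apply (pls u2 y); auto).
  assert (ncu : ~ collinear I u1 u2).
  { intro C. destruct (notri u1 u2 y) as [k [? [? ?]]]; auto.
    - exists l2; auto.
    - exists l1; auto.
    - assert (k = l1) by (apply (pls u1 y); auto).
      assert (k = l2) by (apply (pls u2 y); auto). congruence. }
  assert (dv2y : v2 <> y) by (intro; subst; apply nxy; exists m2; auto).
  assert (n1 : ~ collinear I v2 y).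
  { intro C. destruct (notri v2 u2 y) as [k [? [? ?]]]; auto.
    - exists m2; auto.
    - exists l2; auto.
    - assert (k = m2) by (eapply pls; [exact dv2u2| | | |]; eauto). subst.
      apply nxy; exists m2; auto. }
  assert (dxu1 : x <> u1) by (intro; subst; apply nxy; exists l1; auto).
  assert (dv2u1 : v2 <> u1) by (intro; subst; apply ncu; exists m2; auto).
  assert (n2 : ~ collinear I v2 u1).
  { intro C. destruct (notri v2 x u1) as [k [? [? ?]]]; auto.
    - exists m2; auto.
    - assert (k = m2) by (eapply pls; [exact dv2x| | | |]; eauto). subst.
      apply ncu; exists m2; auto. }
  assert (nI : ~ I v2 l1) by (intro; apply n1; exists l1; auto).
  destruct (gqax v2 l1 nI) as [z [[Hz Cz] _]].
  destruct (line3 y u1 w1 z l1) as [?|[?|?]]; auto; subst.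
  - tauto.
  - tauto.
  - split; auto. intro; subst. apply n1. exists l1; auto.
Qed.

Lemma coll_q x y u1 u2 v1 v2 w1 q l1 m1 m2 n :
  ~ collinear I x y -> I y l1 -> I u1 l1 -> I w1 l1 -> I x m1 -> I u1 m1 -> I v1 m1 ->
  I x m2 -> I u2 m2 -> I v2 m2 -> I v2 n -> I w1 n -> I q n ->
  u1 <> w1 -> u1 <> v1 -> x <> v1 -> v2 <> w1 -> v2 <> q -> w1 <> q -> m1 <> m2 -> v2 <> x ->
  collinear I v1 q /\ v1 <> q.
Proof.
  intros nxy Hy1 Hu1 Hw1 Hx1 Hu11 Hv1 Hx2 Hu2 Hv2 Hv2n Hw1n Hqn
    du1w1 du1v1 dxv1 dv2w1 dv2q dw1q dm dv2x.
  assert (dv12 : v1 <> v2) by (intro E; subst v2; apply dm; apply (pls x v1); auto).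
  assert (n1 : ~ collinear I v1 v2).
  { intro C. assert (dv1x : v1 <> x) by congruence.
    assert (dxv2 : x <> v2) by congruence.
    destruct (notri v1 x v2 dv1x dxv2 dv12 (col_of _ _ _ Hv1 Hx1) (col_of _ _ _ Hx2 Hv2) C)
      as [k [? [? ?]]].
    { assert (k = m1) by (apply (pls x v1); auto).
      assert (k = m2) by (apply (pls x v2); auto; intro; subst; auto). congruence. } }
  assert (dv1w1 : v1 <> w1).
  { intro; subst. apply nxy. assert (m1 = l1) by (eapply pls; [exact du1w1| | | |]; eauto).
    subst. exists l1; auto. }
  assert (n2 : ~ collinear I v1 w1).
  { intro C. destruct (notri v1 u1 w1) as [k [? [? ?]]]; auto.
    - exists m1; auto.
    - exists l1; auto.
    - apply nxy. assert (m1 = l1).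
      { assert (k = m1) by (apply (pls u1 v1); auto).
        assert (k = l1) by (apply (pls u1 w1); auto). congruence. }
      subst. exists l1; auto. }
  assert (nI : ~ I v1 n) by (intro; apply n1; exists n; auto).
  destruct (gqax v1 n nI) as [z [[Hz Cz] _]].
  destruct (line3 v2 w1 q z n) as [?|[?|?]]; auto; subst; try tauto.
  split; auto. intro; subst. apply n1. exists n; auto.
Qed.

End Geo.

Lemma ncu_lem (P L : Type) (I : P -> L -> Prop)
  (pls : forall x y l m, x <> y -> I x l -> I y l -> I x m -> I y m -> l = m)
  (gqax : forall x l, ~ I x l ->
     exists y, (I y l /\ collinear I x y) /\
       forall y', I y' l -> collinear I x y' -> y' = y)
  x y u1 u2 l1 l2 :
  ~ collinear I x y -> I y l1 -> I y l2 -> l1 <> l2 -> I u1 l1 -> I u2 l2 ->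
  collinear I x u1 -> collinear I x u2 -> ~ collinear I u1 u2 /\ u1 <> u2.
Proof.
  intros nxy Hy1 Hy2 d12 Hu1 Hu2 c1 c2.
  assert (du1y : u1 <> y) by (intro; subst; auto).
  assert (du2y : u2 <> y) by (intro; subst; auto).
  assert (du12 : u1 <> u2) by (intro; subst; apply d12; apply (pls u2 y); auto).
  split; auto. intro C.
  destruct (notri P L I gqax u1 u2 y du12 du2y du1y C (col_of P L I u2 y l2 Hu2 Hy2) (col_of P L I u1 y l1 Hu1 Hy1)) as [k [? [? ?]]].
  assert (k = l1) by (apply (pls u1 y); auto).
  assert (k = l2) by (apply (pls u2 y); auto). congruence.
Qed.

Section Grp.
Variables (G : Type) (mul : G -> G -> G) (inv : G -> G) (e : G).
Hypothesis assoc : forall a b c, mul a (mul b c) = mul (mul a b) c.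
Hypothesis idl : forall a, mul e a = a.
Hypothesis idr : forall a, mul a e = a.
Hypothesis invl : forall a, mul (inv a) a = e.
Hypothesis invr : forall a, mul a (inv a) = e.

Lemma lcancel g h k : mul g h = mul g k -> h = k.
Proof. intros H. rewrite <- (idl h), <- (idl k), <- (invl g), <- !assoc, H. reflexivity. Qed.
Lemma rcancel g h k : mul h g = mul k g -> h = k.
Proof. intros H. rewrite <- (idr h), <- (idr k), <- (invr g), !assoc, H. reflexivity. Qed.

Lemma kl_aux x y z : x <> y -> x <> e -> y <> e -> mul y y = e ->
  (mul x y = e \/ mul x y = x \/ mul x y = y \/ mul x y = z) -> mul x y = z.
Proof.
  intros dxy dx dy yy [H|[H|[H|H]]]; auto; exfalso.
  - apply dxy. rewrite <- (idr x), <- yy, assoc, H, idl. reflexivity.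
  - apply dy. apply (lcancel x). rewrite H, idr. reflexivity.
  - apply dx. apply (rcancel y). rewrite H, idl. reflexivity.
Qed.

Lemma klein_prod a b c : klein_four mul e a b c -> mul a b = c /\ mul b a = c.
Proof.
  intros [nd [cl sq]].
  inversion nd as [|? ? n1 nd1]; subst. inversion nd1 as [|? ? n2 nd2]; subst.
  inversion nd2 as [|? ? n3 nd3]; subst. simpl in n1, n2, n3.
  assert (Ka : a = e \/ a = a \/ a = b \/ a = c) by auto.
  assert (Kb : b = e \/ b = a \/ b = b \/ b = c) by auto.
  split.
  - apply kl_aux; try (intro; subst; tauto). apply sq; auto.
    specialize (cl a b Ka Kb). simpl in cl. tauto.
  - apply kl_aux; try (intro; subst; tauto). apply sq; auto.
    specialize (cl b a Kb Ka). simpl in cl. tauto.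
Qed.
End Grp.

Theorem proposition3p1 (P L : Type) (I : P -> L -> Prop) (t : nat)
  (G : Type) (mul : G -> G -> G) (inv : G -> G) (e : G) (r : P -> G) :
  is_GQ_2t I t ->
  is_group mul inv e ->
  is_representation I mul inv e r ->
  elementary_abelian_2 mul e.
Proof.
  intros [pls [card3 [ptcard [_ gqax]]]] [assoc [idl [idr [invl invr]]]] [ord2 [gen klein]].
  assert (kl : forall l x y z, I x l -> I y l -> I z l -> x <> y -> y <> z -> x <> z ->
     mul (r x) (r y) = r z /\ mul (r y) (r x) = r z).
  { intros. apply (klein_prod G mul inv e assoc idl idr invl invr). eapply klein; eauto. }
  assert (thirdr : forall a b l, a <> b -> I a l -> I b l -> exists c, I c l /\ c <> a /\ c <> b /\
     mul (r a) (r b) = r c /\ mul (r b) (r a) = r c).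
  { intros a b l dab Ha Hb. destruct (third_pt P L I card3 a b l dab Ha Hb) as [c [Hc [dca dcb]]].
    exists c. destruct (kl l a b c) as [E1 E2]; auto. }
  assert (comm : forall x y, mul (r x) (r y) = mul (r y) (r x)).
  { intros x y.
    destruct (classic (x = y)) as [->|dxy]; [reflexivity|].
    destruct (classic (collinear I x y)) as [[l [Hx Hy]]|nxy].
    { destruct (thirdr x y l) as [z [_ [_ [_ [E1 E2]]]]]; auto. congruence. }
    destruct (two_lines P L I t ptcard gqax x y nxy) as [l1 [l2 [d12 [Hy1 Hy2]]]].
    assert (nI1 : ~ I x l1) by (intro; apply nxy; exists l1; auto).
    assert (nI2 : ~ I x l2) by (intro; apply nxy; exists l2; auto).
    destruct (gqax x l1 nI1) as [u1 [[Hu1 cxu1] _]].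
    destruct (gqax x l2 nI2) as [u2 [[Hu22 cxu2] _]].
    destruct (ncu_lem P L I pls gqax x y u1 u2 l1 l2) as [ncu du12]; auto.
    assert (du1y : u1 <> y) by (intro; subst; auto).
    assert (du2y : u2 <> y) by (intro; subst; auto).
    assert (dxu1 : x <> u1) by (intro; subst; auto).
    assert (dxu2 : x <> u2) by (intro; subst; auto).
    destruct cxu1 as [m1 [Hx1 Hu11]].
    destruct cxu2 as [m2 [Hx2 Hu2]].
    destruct (thirdr x u1 m1) as [v1 [Hv1 [dv1x [dv1u1 [Ev1 Ev1']]]]]; auto.
    destruct (thirdr x u2 m2) as [v2 [Hv2 [dv2x [dv2u2 [Ev2 Ev2']]]]]; auto.
    destruct (thirdr y u1 l1) as [w1 [Hw1 [dw1y [dw1u1 [Ew1 Ew1']]]]]; auto.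
    destruct (thirdr y u2 l2) as [w2 [Hw2 [dw2y [dw2u2 [Ew2 Ew2']]]]]; auto.
    destruct (cross P L I pls card3 gqax x y u1 u2 l1 l2 m2 v2 w1) as [cv2w1 dv2w1]; auto.
    { exists m1; auto. }
    destruct (cross P L I pls card3 gqax x y u2 u1 l2 l1 m1 v1 w2) as [cv1w2 dv1w2]; auto.
    { exists m2; auto. }
    destruct cv2w1 as [n [Hv2n Hw1n]].
    destruct (thirdr v2 w1 n) as [q [Hqn [dqv2 [dqw1 [Eq Eq']]]]]; auto.
    assert (dm : m1 <> m2) by (intro; subst; apply ncu; exists m2; auto).
    destruct (coll_q P L I pls card3 gqax x y u1 u2 v1 v2 w1 q l1 m1 m2 n) as [cv1q dv1q]; auto.
    destruct (coll_q P L I pls card3 gqax y x u2 u1 w2 w1 v2 q m2 l2 l1 n) as [cw2q dw2q]; auto.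
    { intro C; apply nxy; apply col_sym; auto. }
    destruct (notri P L I gqax v1 w2 q dv1w2 dw2q dv1q) as [k [Hv1k [Hw2k Hqk]]]; auto.
    destruct (kl k v1 w2 q) as [Ek _]; auto.
    set (a := r x) in *. set (b := r u1) in *. set (c := r u2) in *. set (d := r y) in *.
    assert (Hcb : mul c b = mul b c).
    { apply (lcancel G mul inv e assoc idl invl a). apply (rcancel G mul inv e assoc idr invr d).
      transitivity (mul (r v2) (r w1)).
      { rewrite <- Ev2, <- Ew1'. rewrite !assoc; reflexivity. }
      rewrite Eq, <- Ek, <- Ev1, <- Ew2'. rewrite !assoc; reflexivity. }
    apply (rcancel G mul inv e assoc idr invr (mul c b)).
    transitivity (mul (r v2) (r w1)).
    { rewrite <- Ev2, <- Ew1. rewrite !assoc. f_equal.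
      rewrite <- (assoc a d c), <- (assoc a c d). f_equal. congruence. }
    rewrite Eq, <- Eq', <- Ew1, <- Ev2. rewrite Hcb. rewrite !assoc. f_equal.
    rewrite <- (assoc d a b), <- (assoc d b a). f_equal. congruence. }
  assert (H1 : forall g x, mul g (r x) = mul (r x) g).
  { intros g. apply (gen (fun g => forall x, mul g (r x) = mul (r x) g)); [| intros; apply comm].
    repeat split.
    - intros; rewrite idl, idr; reflexivity.
    - intros a b Ha Hb x. rewrite <- assoc, Hb, assoc, Ha, assoc. reflexivity.
    - intros a Ha x. apply (rcancel G mul inv e assoc idr invr a).
      rewrite <- !assoc, <- (Ha x), invl, idr, assoc, invl, idl. reflexivity. }
  assert (H2 : forall g h, mul g h = mul h g).
  { intros g. apply (gen (fun g => forall h, mul g h = mul h g)); [| intros; symmetry; apply H1].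
    repeat split.
    - intros; rewrite idl, idr; reflexivity.
    - intros a b Ha Hb x. rewrite <- assoc, Hb, assoc, Ha, assoc. reflexivity.
    - intros a Ha x. apply (rcancel G mul inv e assoc idr invr a).
      rewrite <- !assoc, <- (Ha x), invl, idr, assoc, invl, idl. reflexivity. }
  split; auto.
  apply (gen (fun g => mul g g = e)).
  - repeat split.
    + apply idl.
    + intros a b Ha Hb. rewrite <- assoc, (assoc b a b), (H2 b a), <- (assoc a b b), Hb, idr, Ha.
      reflexivity.
    + intros a Ha. assert (inv a = a).
      { rewrite <- (idr (inv a)), <- Ha, assoc, invl, idl. reflexivity. }
      rewrite H; auto.
  - intros x. apply ord2.
Qed.
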